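(* Let $\mathbf{x}$ be generated by an additive noise model $x_i=f_i(\mathbf{x}_{\mathrm{pa}(i)})+\epsilon_i$ over a DAG $\mathcal{G}$ with mutually independent $\epsilon_i\sim\mathcal{N}(0,\sigma^2)$, $\sigma^2>0$, and $f_i$ twice continuously differentiable, with all expectations below finite. Let $H(\mathbf{x})=-\nabla^2_{\mathbf{x}}\log p(\mathbf{x})$, let $l$ be a sink (leaf) node of $\mathcal{G}$, and for a symmetric matrix $M$ indexed by $\{1,\dots,d\}$ with $M_{ll}\neq 0$ let $\mathrm{Schur}(M)=M_{\setminus l,\setminus l}-M_{\setminus l,l}M_{ll}^{-1}M_{l,\setminus l}$. Then $$\Delta := \mathbb{E}[\mathrm{Schur}(H(\mathbf{x}))] - \mathrm{Schur}(\mathbb{E}[H(\mathbf{x})]) = -\frac{1}{\sigma^2}\,\mathrm{Cov}_{p(\mathbf{x})}\!\left(\nabla_{\mathbf{x}_{\setminus l}} f_l(\mathbf{x}_{\mathrm{pa}(l)})\right).$$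
   Context: $\mathrm{pa}(i)$ denotes the parents of node $i$ in $\mathcal{G}$; $p$ is the joint density of $\mathbf{x}$. $M_{\setminus l,\setminus l}$ is the submatrix with row and column $l$ removed, $M_{\setminus l,l}$ the $l$-th column with entry $l$ removed, $M_{l,\setminus l}$ the $l$-th row with entry $l$ removed. $\nabla_{\mathbf{x}_{\setminus l}} f_l$ is the gradient of $f_l$ (viewed as a function of $\mathbf{x}_{\setminus l}$) and $\mathrm{Cov}$ its covariance matrix under $p$. *)

(* Defs.v *)
From HB Require Import structures.
From mathcomp Require Import all_boot all_order all_algebra.
From mathcomp Require Import all_classical all_reals all_analysis.
From mathcomp Require Import normal_distribution.

Set Implicit Arguments.
Unset Strict Implicit.
Unset Printing Implicit Defensive.

Import Order.TTheory GRing.Theory Num.Theory.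
Import numFieldNormedType.Exports.

Local Open Scope classical_set_scope.
Local Open Scope ring_scope.

(* Points of R^d, d = n.+1, are row vectors 'rV[R]_n.+1; coordinate i of x is x 0 i. *)

Section Defs.
Context {R : realType} {n : nat}.

Definition partial (g : 'rV[R]_n.+1 -> R) (j : 'I_n.+1) : 'rV[R]_n.+1 -> R :=
  fun x => 'D_(delta_mx 0 j) g x.

Definition hessian (g : 'rV[R]_n.+1 -> R) (x : 'rV[R]_n.+1) : 'M[R]_n.+1 :=
  \matrix_(j, k) partial (partial g k) j x.

Definition C2 (g : 'rV[R]_n.+1 -> R) : Prop :=
  [/\ forall x, differentiable g x,
      forall j x, differentiable (partial g j) x
    & forall j k, continuous (partial (partial g j) k)].

(* pa i j  means  j is a parent of i (edge j -> i).  DAG = no directed cycle. *)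
Definition is_dag (pa : rel 'I_n.+1) : Prop :=
  forall i j, pa i j -> ~~ connect pa j i.

Definition is_sink (pa : rel 'I_n.+1) (l : 'I_n.+1) : Prop :=
  forall i, ~~ pa i l.

Definition depends_only_on_parents (pa : rel 'I_n.+1) (i : 'I_n.+1)
  (g : 'rV[R]_n.+1 -> R) : Prop :=
  forall x y : 'rV[R]_n.+1, (forall j, pa i j -> x 0 j = y 0 j) -> g x = g y.

Definition anm_density (sigma : R) (f : 'I_n.+1 -> 'rV[R]_n.+1 -> R)
  (x : 'rV[R]_n.+1) : R :=
  \prod_(i < n.+1) normal_pdf 0 sigma (x 0 i - f i x).

Definition neg_log_hessian (p : 'rV[R]_n.+1 -> R) (x : 'rV[R]_n.+1) : 'M[R]_n.+1 :=
  - hessian (fun y => ln (p y)) x.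

Definition schur (M : 'M[R]_n.+1) (l : 'I_n.+1) : 'M[R]_n :=
  \matrix_(a, b) (M (lift l a) (lift l b)
                  - M (lift l a) l * (M l l)^-1 * M l (lift l b)).

Definition grad_minus (l : 'I_n.+1) (g : 'rV[R]_n.+1 -> R) (x : 'rV[R]_n.+1) : 'rV[R]_n :=
  \row_a partial g (lift l a) x.

End Defs.

Section Prob.
Context {d : measure_display} {T : measurableType d} {R : realType}.

Definition mutually_independent (P : probability T R) (k : nat)
  (X : 'I_k -> T -> R) : Prop :=
  (forall i, measurable_fun setT (X i)) /\
  forall A : 'I_k -> set R, (forall i, measurable (A i)) ->
    P (\bigcap_(i in setT) (X i @^-1` A i)) = (\prod_(i < k) P (X i @^-1` A i))%E.

Definition centered_gaussian (P : probability T R) (X : T -> R) (sigma : R) : Prop :=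
  measurable_fun setT X /\
  forall A : set R, measurable A -> P (X @^-1` A) = normal_prob 0 sigma A.

Definition fin_expect (P : probability T R) (Y : T -> R) : Prop :=
  P.-integrable setT (fun w => (Y w)%:E).

Definition Emx (P : probability T R) (m m' : nat) (Y : T -> 'M[R]_(m, m')) : 'M[R]_(m, m') :=
  \matrix_(a, b) fine ('E_P[fun w => Y w a b])%E.

Definition covmx (P : probability T R) (m : nat) (Y : T -> 'rV[R]_m) : 'M[R]_m :=
  \matrix_(a, b) fine (covariance P (fun w => Y w 0 a) (fun w => Y w 0 b)).

End Prob.

(* Main.v *)
Require Import Defs.
From HB Require Import structures.
From mathcomp Require Import all_boot all_order all_algebra.
From mathcomp Require Import all_classical all_reals all_analysis.
From mathcomp Require Import normal_distribution.
From mathcomp Require Import ring lra.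
Import Order.TTheory GRing.Theory Num.Theory.
Import numFieldNormedType.Exports.
Local Open Scope classical_set_scope.
Local Open Scope ring_scope.

Section H.
Context {R : realType} {n : nat}.
Local Notation V := 'rV[R]_n.+1.

Lemma line_quad (g : V -> R) (y v : V) (c e : R) :
  (forall h, g (h *: v + y) = g y + h * c + h ^+ 2 * e) ->
  derivable g y v /\ 'D_v g y = c.
Proof.
move=> hg.
have L : (fun h : R => h^-1 *: ((g \o shift y) (h *: v) - g y)) @ 0^' --> c.
  have C : (fun h : R => c + h * e) @ 0^' --> c + 0 * e.
    apply: cvgD; first exact: cvg_cst.
    apply: cvgMl; apply: cvg_within_filter; exact: cvg_id.
  rewrite mul0r addr0 in C.
  apply: cvg_trans C; apply: near_eq_cvg; near=> h.
  have h0 : h != 0 by near: h; exact: nbhs_dnbhs_neq.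
  rewrite /= hg (_ : g y + h * c + h ^+ 2 * e - g y = h * (c + h * e)); last by ring.
  by rewrite scalerAl -[h^-1 *: h]/(h^-1 * h) mulVf // mul1r.
split; first by apply/cvg_ex; exists c.
exact: cvg_lim L.
Unshelve. all: by end_near. Qed.

Lemma line_lin (g : V -> R) (y v : V) (c : R) :
  (forall h, g (h *: v + y) = g y + h * c) ->
  derivable g y v /\ 'D_v g y = c.
Proof.
move=> hg; apply: (line_quad g y v c 0) => h.
by rewrite hg mulr0 addr0.
Qed.

Lemma coordE (t : R) (k i : 'I_n.+1) (y : V) :
  (t *: delta_mx 0 k + y) 0 i = y 0 i + t * (i == k)%:R.
Proof. by rewrite !mxE eqxx /= addrC. Qed.

Lemma Dcoord (i : 'I_n.+1) (y v : V) :
  derivable (fun z : V => z 0 i) y v /\ 'D_v (fun z : V => z 0 i) y = v 0 i.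
Proof. by apply: line_lin => h; rewrite !mxE addrC. Qed.

Lemma ln_prod (k : nat) (F : 'I_k -> R) : (forall i, 0 < F i) ->
  ln (\prod_(i < k) F i) = \sum_(i < k) ln (F i).
Proof.
move=> F0.
suff [] : 0 < \prod_(i < k) F i /\ ln (\prod_(i < k) F i) = \sum_(i < k) ln (F i) by [].
apply: (big_ind2 (R1 := R) (R2 := R) (fun x y => 0 < x /\ ln x = y)).
- by rewrite ln1.
- move=> x1 x2 y1 y2 [p1 <-] [p2 <-]; split; first exact: mulr_gt0.
  by rewrite lnM // posrE.
- by move=> i _; split.
Qed.
End H.
Arguments line_quad {R n g y v c e}.
Arguments line_lin {R n g y v c}.
Section M.
Context {R : realType} {n : nat} (pa : rel 'I_n.+1)
  (f : 'I_n.+1 -> 'rV[R]_n.+1 -> R) (sigma : R) (l : 'I_n.+1).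
Context (hdep : forall i, depends_only_on_parents pa i (f i))
  (hC2 : forall i, C2 (f i)) (hs : 0 < sigma) (hsink : is_sink pa l).
Local Notation V := 'rV[R]_n.+1.

Let e : V := delta_mx 0 l.
Let s2 : R := sigma ^+ 2 *+ 2.
Let K : R := ln (normal_peak sigma).
Let r (i : 'I_n.+1) : V -> R := (fun z : V => z 0 i) - f i.
Let T (i : 'I_n.+1) : V -> R := cst K - s2^-1 \*: (r i * r i).
Let F : V -> R := fun y => ln (anm_density sigma f y).
Let Q : V -> R := F - T l.

Let rE i z : r i z = z 0 i - f i z. Proof. by []. Qed.
Let TE i z : T i z = K - s2^-1 * (r i z * r i z). Proof. by []. Qed.
Let QE' z : Q z = F z - T l z. Proof. by []. Qed.

Let sn0 : sigma != 0. Proof. by rewrite gt_eqF. Qed.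

Let f_shift i t y : f i (t *: e + y) = f i y.
Proof.
apply: hdep => j pij; rewrite /e coordE.
have -> : (j == l) = false.
  by apply/negbTE/eqP => ejl; move: (hsink i); rewrite -ejl pij.
by rewrite mulr0 addr0.
Qed.

Let r_shift i t y : r i (t *: e + y) = r i y + t * (i == l)%:R.
Proof. by rewrite !rE f_shift /e coordE addrAC. Qed.

Let T_shift i t y : i != l -> T i (t *: e + y) = T i y.
Proof. by move=> il; rewrite !TE r_shift (negbTE il) mulr0 addr0. Qed.

Let FE : F = \sum_(i < n.+1) T i.
Proof.
rewrite fct_sumE; apply/funext => y; rewrite /F /anm_density ln_prod.
  apply: eq_bigr => i _; rewrite normal_pdfE // /normal_fun.
  rewrite lnM ?posrE ?normal_peak_gt0 ?expR_gt0 //.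
  by rewrite expRK subr0 TE rE /K /s2 mulNr expr2 mulrC.
by move=> i; rewrite normal_pdfE // /normal_fun mulr_gt0 ?normal_peak_gt0 ?expR_gt0.
Qed.

Let QE y : Q y = \sum_(i < n.+1 | i != l) T i y.
Proof. by rewrite QE' FE fct_sumE (bigD1 l) //= addrAC subrr add0r. Qed.

Let Q_shift t y : Q (t *: e + y) = Q y.
Proof. by rewrite !QE; apply: eq_bigr => i il; rewrite T_shift. Qed.

Let F_shift t y : F (t *: e + y) = F y + t * (- r l y / sigma ^+ 2) + t ^+ 2 * (- s2^-1).
Proof.
have FQ z : F z = Q z + T l z by rewrite QE' subrK.
rewrite !FQ Q_shift !TE r_shift eqxx mulr1 /s2.
by field.
Qed.

Let sc (a b : R) : a *: b = a * b. Proof. by []. Qed.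

Let Dr i z v : derivable (r i) z v /\ 'D_v (r i) z = v 0 i - 'D_v (f i) z.
Proof.
have [dc Dc] := Dcoord i z v.
have [hd _ _] := hC2 i.
have df : derivable (f i) z v by exact: diff_derivable.
split; first exact: derivableB.
by rewrite deriveB // Dc.
Qed.

Let DT i z v : derivable (T i) z v /\
  'D_v (T i) z = - (r i z * 'D_v (r i) z) / sigma ^+ 2.
Proof.
have [dr _] := Dr i z v.
have dm : derivable (r i * r i) z v by exact: derivableM.
rewrite /T.
split; first exact: (derivableB (derivable_cst K z v) (derivableZ dm)).
rewrite deriveB; [|exact: derivable_cst|exact: derivableZ].
rewrite derive_cst deriveZ // deriveM // !sc /s2.
by field.
Qed.

Let DF z v : derivable F z v.
Proof. by rewrite FE; apply: derivable_sum => i; exact: (DT i z v).1. Qed.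

Let derive_shift (g : V -> R) v t y : (forall t z, g (t *: e + z) = g z) ->
  'D_v g (t *: e + y) = 'D_v g y.
Proof.
move=> hg; rewrite /derive.
have -> : (fun h : R => h^-1 *: ((g \o shift (t *: e + y)) (h *: v) - g (t *: e + y)))
  = (fun h => h^-1 *: ((g \o shift y) (h *: v) - g y)).
  by apply/funext => h /=; rewrite hg addrCA hg.
by [].
Qed.

Let dFl : partial F l = fun z => - r l z / sigma ^+ 2.
Proof.
apply/funext => z; rewrite /partial.
exact: (line_quad (fun h => F_shift h z)).2.
Qed.

Let Hll y : partial (partial F l) l y = - (sigma ^+ 2)^-1.
Proof.
rewrite dFl /partial; apply: (line_lin _).2 => h.
rewrite r_shift eqxx mulr1; by field.
Qed.

Let lift_l (a : 'I_n) : (delta_mx 0 (lift l a) : V) 0 l = 0.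
Proof. by rewrite mxE eqxx /= (negbTE (neq_lift l a)). Qed.

Let Hal a y : partial (partial F l) (lift l a) y
  = (sigma ^+ 2)^-1 * partial (f l) (lift l a) y.
Proof.
rewrite dFl.
have -> : (fun z => - r l z / sigma ^+ 2) = (- (sigma ^+ 2)^-1) \*: r l.
  by apply/funext => z /=; rewrite sc mulrC mulrN mulNr.
rewrite /partial deriveZ; last exact: (Dr l y _).1.
rewrite (Dr l y _).2 lift_l sc; by ring.
Qed.

Let Hlb b y : partial (partial F (lift l b)) l y
  = (sigma ^+ 2)^-1 * partial (f l) (lift l b) y.
Proof.
set v : V := delta_mx 0 (lift l b).
have DFb z : 'D_v F z = 'D_v Q z + - (r l z * - 'D_v (f l) z) / sigma ^+ 2.
  have -> : F = Q + T l by rewrite /Q subrK.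
  rewrite deriveD; last 2 first.
  - exact: (derivableB (DF z v) (DT l z v).1).
  - exact: (DT l z v).1.
  by rewrite (DT l z v).2 (Dr l z v).2 lift_l sub0r.
rewrite /partial; apply: (line_lin _).2 => h.
rewrite !DFb derive_shift; last exact: Q_shift.
rewrite (derive_shift (f l)); last exact: f_shift.
rewrite r_shift eqxx mulr1; by field.
Qed.

Local Notation H := (neg_log_hessian (anm_density sigma f)).

Lemma H_ll y : H y l l = (sigma ^+ 2)^-1.
Proof. by rewrite /neg_log_hessian /hessian !mxE Hll opprK. Qed.

Lemma H_al y a : H y (lift l a) l = - ((sigma ^+ 2)^-1 * grad_minus l (f l) y 0 a).
Proof. by rewrite /neg_log_hessian /hessian /grad_minus !mxE Hal. Qed.

Lemma H_lb y b : H y l (lift l b) = - ((sigma ^+ 2)^-1 * grad_minus l (f l) y 0 b).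
Proof. by rewrite /neg_log_hessian /hessian /grad_minus !mxE Hlb. Qed.

Lemma schur_pt y a b : schur (H y) l a b = H y (lift l a) (lift l b)
  - (sigma ^+ 2)^-1 * (grad_minus l (f l) y 0 a * grad_minus l (f l) y 0 b).
Proof.
rewrite /schur mxE H_ll H_al H_lb.
by field.
Qed.
End M.

Theorem proposition3p4 (R : realType) (n : nat) (pa : rel 'I_n.+1)
  (f : 'I_n.+1 -> 'rV[R]_n.+1 -> R) (sigma : R)
  (dT : measure_display) (T : measurableType dT) (P : probability T R)
  (eps : 'I_n.+1 -> T -> R) (x : T -> 'rV[R]_n.+1) (l : 'I_n.+1) :
  is_dag pa ->
  (forall i, depends_only_on_parents pa i (f i)) ->
  (forall i, C2 (f i)) ->
  0 < sigma ->
  mutually_independent P eps ->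
  (forall i, centered_gaussian P (eps i) sigma) ->
  (forall w i, x w 0 i = f i (x w) + eps i w) ->
  is_sink pa l ->
  let H := neg_log_hessian (anm_density sigma f) in
  (forall j k, fin_expect P (fun w => H (x w) j k)) ->
  (forall a b, fin_expect P (fun w => schur (H (x w)) l a b)) ->
  (forall a, fin_expect P (fun w => grad_minus l (f l) (x w) 0 a)) ->
  (forall a b, fin_expect P (fun w => grad_minus l (f l) (x w) 0 a
                                      * grad_minus l (f l) (x w) 0 b)) ->
  Emx P (fun w => schur (H (x w)) l) - schur (Emx P (fun w => H (x w))) l
  = - (sigma ^+ 2)^-1 *: covmx P (fun w => grad_minus l (f l) (x w)).
Proof.
move=> _ hdep hC2 hs _ _ _ hsink H hH hS hg hgg.
have L1 (Y : T -> R) : fin_expect P Y -> Y \in Lfun P 1.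
  by move=> h; apply/Lfun1_integrable.
have fE (Y : T -> R) : fin_expect P Y -> ('E_P[Y])%E = (fine ('E_P[Y])%E)%:E.
  by move=> h; rewrite fineK // expectation_fin_num // L1.
apply/matrixP => a b; rewrite !mxE.
set g := fun (a : 'I_n) (w : T) => grad_minus l (f l) (x w) 0 a.
set s := sigma ^- 2.
have ES : ('E_P[fun w => schur (H (x w)) l a b] =
   'E_P[fun w => H (x w) (lift l a) (lift l b)] - s%:E * 'E_P[g a * g b])%E.
  rewrite (_ : (fun w => schur (H (x w)) l a b) =
     (fun w => H (x w) (lift l a) (lift l b)) \- (s \o* (g a * g b))); last first.
    apply: funext => w /=.
    by rewrite /H (schur_pt _ _ _ _ hdep hC2 hs hsink) mulrC.
  have hgg1 : (g a * g b)%R \in Lfun P 1 by exact: (L1 _ (hgg a b)).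
  have := expectationB (L1 _ (hH (lift l a) (lift l b))) (Lfun_scale s (lexx 1) hgg1).
  by move=> ->; rewrite expectationZl.
have ELL : ('E_P[fun w => H (x w) l l] = s%:E)%E.
  rewrite (_ : (fun w => H (x w) l l) = cst s) ?expectation_cst //.
  by apply: funext => w; rewrite /H (H_ll _ _ _ _ hdep hs hsink).
have EAL c : ('E_P[fun w => H (x w) (lift l c) l] = (- s)%:E * 'E_P[g c])%E.
  rewrite -expectationZl; last exact: (L1 _ (hg c)).
  congr expectation; apply: funext => w /=.
  by rewrite /H (H_al _ _ _ _ hdep hC2 hs hsink) mulrC mulrN.
have ELB c : ('E_P[fun w => H (x w) l (lift l c)] = (- s)%:E * 'E_P[g c])%E.
  rewrite -expectationZl; last exact: (L1 _ (hg c)).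
  congr expectation; apply: funext => w /=.
  by rewrite /H (H_lb _ _ _ _ hdep hC2 hs hsink) mulrC mulrN.
rewrite covarianceE; last 3 first.
- exact: (L1 _ (hg a)).
- exact: (L1 _ (hg b)).
- exact: (L1 _ (hgg a b)).
rewrite ES ELL EAL ELB.
rewrite (fE _ (hH (lift l a) (lift l b))) (fE _ (hgg a b)) (fE _ (hg a)) (fE _ (hg b)).
rewrite /= /s.
have sn0 : sigma != 0 by rewrite gt_eqF.
by field.
Qed.
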